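(* Let $\mathcal{C}$ be a stable M-category with a terminal object $1$ and limits of chains. Let $B\colon\mathcal{C}^{op}\times\mathcal{C}\to\mathcal{C}$ be a bifunctor such that (1) $B$ is locally contractive in the first argument and locally non-expansive in the second argument; (2) the hom-set $\mathcal{C}(1,B(1,1))$ is inhabited; (3) for each object $X$ the final sequence of the endofunctor $B(X,-)$ converges. Then $B$ has a locally final coalgebra, i.e. a morphism $z\colon Z\to B(Z,Z)$ such that $(Z,z)$ is a final coalgebra of the endofunctor $B(Z,-)$. If moreover all hom-sets of $\mathcal{C}$ are inhabited, this locally final coalgebra is unique up to isomorphism.
   Context: An ultrametric space is a metric space $(X,d)$ with $d(x,z)\le\max(d(x,y),d(y,z))$; it is 1-bounded if $d\le 1$. A map $f$ between metric spaces is non-expansive if $d(f(x),f(y))\le d(x,y)$. An M-category is a category in which every hom-set $\mathcal{C}(A,B)$ carries a complete, 1-bounded ultrametric $d$ such that composition $\mathcal{C}(B,C)\times\mathcal{C}(A,B)\to\mathcal{C}(A,C)$ is non-expansive (product metric $=\max$). It is stable if for all parallel $f,g\colon A\to B$ and every inhabited jointly monic family $h_i\colon B\to C_i$ ($i\in I$) one has $d(f,g)=\sup_{i\in I}d(h_i\cdot f,h_i\cdot g)$. ''Limits of chains'' means limits of all $\alpha^{op}$-chains for all ordinals $\alpha$. $B$ is locally contractive in the first argument if there is $c\in[0,1)$ such that $d(B(f,\mathrm{id}_Y),B(g,\mathrm{id}_Y))\le c\cdot d(f,g)$ for all objects $Y$ and all $f,g\colon X\to X'$; locally non-expansive in the second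 argument if $d(B(\mathrm{id}_X,f),B(\mathrm{id}_X,g))\le d(f,g)$ for all $X$ and $f,g\colon Y\to Y'$. The final sequence of an endofunctor $H$ is the diagram $(D_\alpha)$ indexed by ordinals (with connecting maps $D_{\alpha,\beta}\colon D_\alpha\to D_\beta$, $\beta\le\alpha$) given by $D_0=1$, $D_{\alpha+1}=HD_\alpha$, $D_{1,0}$ the unique map, $D_{\alpha+1,\beta+1}=HD_{\alpha,\beta}$, and $D_\alpha=\lim_{\beta<\alpha}D_\beta$ for limit ordinals $\alpha$; it converges if $D_{\alpha+1,\alpha}$ is an isomorphism for some ordinal $\alpha$. *)

(* Defs.v *)
From Stdlib Require Import Reals.
Open Scope R_scope.
Unset Implicit Arguments.

Record Category := {
  Ob :> Type;
  hom : Ob -> Ob -> Type;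
  idm : forall X, hom X X;
  cmp : forall X Y Z, hom Y Z -> hom X Y -> hom X Z;
  comp_idl : forall X Y (f : hom X Y), cmp X Y Y (idm Y) f = f;
  comp_idr : forall X Y (f : hom X Y), cmp X X Y f (idm X) = f;
  comp_assoc : forall X Y Z W (h : hom Z W) (g : hom Y Z) (f : hom X Y),
      cmp X Z W h (cmp X Y Z g f) = cmp X Y W (cmp Y Z W h g) f
}.
Arguments hom {c} X Y.
Arguments Ob c : clear implicits.
Arguments idm {c} X.
Arguments cmp {c X Y Z} g f.

Definition IsIso {C : Category} {X Y : C} (f : hom X Y) : Prop :=
  exists g : hom Y X, cmp g f = idm X /\ cmp f g = idm Y.

Definition IsTerminal {C : Category} (T : C) : Prop :=
  (forall X : C, inhabited (hom X T)) /\ (forall X (f g : hom X T), f = g).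

Definition JointlyMonic {C : Category} {B : C} {I : Type} (Ci : I -> C)
  (h : forall i, hom B (Ci i)) : Prop :=
  forall (A : C) (u v : hom A B), (forall i, cmp (h i) u = cmp (h i) v) -> u = v.

Definition IsUltrametric (T : Type) (d : T -> T -> R) : Prop :=
  (forall x y, 0 <= d x y <= 1) /\
  (forall x y, d x y = 0 <-> x = y) /\
  (forall x y, d x y = d y x) /\
  (forall x y z, d x z <= Rmax (d x y) (d y z)).

Definition IsCauchy (T : Type) (d : T -> T -> R) (s : nat -> T) : Prop :=
  forall eps, 0 < eps -> exists N, forall m n, (N <= m)%nat -> (N <= n)%nat ->
    d (s m) (s n) < eps.

Definition ConvergesTo (T : Type) (d : T -> T -> R) (s : nat -> T) (l : T) : Prop :=
  forall eps, 0 < eps -> exists N, forall n, (N <= n)%nat -> d (s n) l < eps.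

Definition IsComplete (T : Type) (d : T -> T -> R) : Prop :=
  forall s, IsCauchy T d s -> exists l, ConvergesTo T d s l.

Record MCategory := {
  mcat :> Category;
  mdist : forall X Y : mcat, hom X Y -> hom X Y -> R;
  mdist_ultra : forall X Y : mcat, IsUltrametric (hom X Y) (mdist X Y);
  mdist_complete : forall X Y : mcat, IsComplete (hom X Y) (mdist X Y);
  mdist_comp_nonexp : forall (X Y Z : mcat) (g g' : hom Y Z) (f f' : hom X Y),
      mdist X Z (cmp g f) (cmp g' f') <= Rmax (mdist Y Z g g') (mdist X Y f f')
}.
Arguments mdist {m X Y} f g.

Definition IsStable (C : MCategory) : Prop :=
  forall (A B : C) (f g : hom A B) (I : Type) (Ci : I -> C) (h : forall i, hom B (Ci i)),
    inhabited I -> @JointlyMonic C B I Ci h ->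
    is_lub (fun r => exists i, r = mdist (cmp (h i) f) (cmp (h i) g)) (mdist f g).

(** * Well-orders (representing ordinals) and chains *)
Record WellOrder := {
  wo_car :> Type;
  wo_lt : wo_car -> wo_car -> Prop;
  wo_wf : well_founded wo_lt;
  wo_trans : forall x y z, wo_lt x y -> wo_lt y z -> wo_lt x z;
  wo_total : forall x y, wo_lt x y \/ x = y \/ wo_lt y x
}.
Arguments wo_lt {w} x y.

Definition wo_le {W : WellOrder} (x y : W) : Prop := wo_lt x y \/ x = y.

Definition IsChain {C : Category} (W : WellOrder) (D : W -> C)
  (Dm : forall a b : W, wo_le b a -> hom (D a) (D b)) : Prop :=
  (forall a (p : wo_le a a), Dm a a p = idm (D a)) /\
  (forall a b c (p : wo_le b a) (q : wo_le c b) (r : wo_le c a),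
      cmp (Dm b c q) (Dm a b p) = Dm a c r).

Definition IsLimitOfChain {C : Category} (W : WellOrder) (D : W -> C)
  (Dm : forall a b : W, wo_le b a -> hom (D a) (D b)) (L : C)
  (pi : forall a, hom L (D a)) : Prop :=
  (forall a b (p : wo_le b a), cmp (Dm a b p) (pi a) = pi b) /\
  (forall (A : C) (c : forall a, hom A (D a)),
      (forall a b (p : wo_le b a), cmp (Dm a b p) (c a) = c b) ->
      exists u : hom A L, (forall a, cmp (pi a) u = c a) /\
        (forall u' : hom A L, (forall a, cmp (pi a) u' = c a) -> u' = u)).

Definition HasChainLimits (C : Category) : Prop :=
  forall (W : WellOrder) (D : W -> C) (Dm : forall a b : W, wo_le b a -> hom (D a) (D b)),
    IsChain W D Dm -> exists (L : C) (pi : forall a, hom L (D a)), IsLimitOfChain W D Dm L pi.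

Definition IsBifunctor {C : Category} (B0 : C -> C -> C)
  (B1 : forall X X' Y Y' : C, hom X' X -> hom Y Y' -> hom (B0 X Y) (B0 X' Y')) : Prop :=
  (forall X Y : C, B1 X X Y Y (idm X) (idm Y) = idm (B0 X Y)) /\
  (forall (X X' X'' Y Y' Y'' : C) (f : hom X' X) (f' : hom X'' X')
          (g : hom Y Y') (g' : hom Y' Y''),
      B1 X X'' Y Y'' (cmp f f') (cmp g' g) = cmp (B1 X' X'' Y' Y'' f' g') (B1 X X' Y Y' f g)).

Definition LocContractiveFst {C : MCategory} (B0 : C -> C -> C)
  (B1 : forall X X' Y Y' : C, hom X' X -> hom Y Y' -> hom (B0 X Y) (B0 X' Y')) : Prop :=
  exists c : R, 0 <= c < 1 /\
    forall (X X' Y : C) (f g : hom X X'),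
      mdist (B1 X' X Y Y f (idm Y)) (B1 X' X Y Y g (idm Y)) <= c * mdist f g.

Definition LocNonExpansiveSnd {C : MCategory} (B0 : C -> C -> C)
  (B1 : forall X X' Y Y' : C, hom X' X -> hom Y Y' -> hom (B0 X Y) (B0 X' Y')) : Prop :=
  forall (X Y Y' : C) (f g : hom Y Y'),
    mdist (B1 X X Y Y' (idm X) f) (B1 X X Y Y' (idm X) g) <= mdist f g.

Definition hcast {C : Category} {X X' Y Y' : C} (e1 : X = X') (e2 : Y = Y')
  (f : hom X Y) : hom X' Y' :=
  match e1 in _ = X1, e2 in _ = Y1 return hom X1 Y1 with
  | eq_refl, eq_refl => f end.

Definition wo_is_min {W : WellOrder} (a : W) : Prop := forall b, ~ wo_lt b a.
(* a is the successor of b *)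
Definition wo_is_succ {W : WellOrder} (b a : W) : Prop :=
  wo_lt b a /\ forall c, wo_lt b c -> wo_lt c a -> False.
Definition wo_is_limit {W : WellOrder} (a : W) : Prop :=
  ~ wo_is_min a /\ forall b, ~ wo_is_succ b a.

Definition IsLimitBelow {C : Category} (W : WellOrder) (D : W -> C)
  (Dm : forall a b : W, wo_le b a -> hom (D a) (D b)) (a : W) : Prop :=
  forall (A : C) (c : forall b, wo_lt b a -> hom A (D b)),
    (forall b b' (hb : wo_lt b a) (hb' : wo_lt b' a) (p : wo_le b' b),
        cmp (Dm b b' p) (c b hb) = c b' hb') ->
    exists u : hom A (D a),
      (forall b (hb : wo_lt b a), cmp (Dm a b (or_introl hb)) u = c b hb) /\
      (forall u' : hom A (D a),
          (forall b (hb : wo_lt b a), cmp (Dm a b (or_introl hb)) u' = c b hb) -> u' = u).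

(** (D, Dm) is the final sequence of H restricted to the ordinals below the
    order type of W (for some choice of terminal object and limits). *)
Definition IsFinalSeqOn {C : Category} (H0 : C -> C)
  (H1 : forall Y Y' : C, hom Y Y' -> hom (H0 Y) (H0 Y'))
  (W : WellOrder) (D : W -> C) (Dm : forall a b : W, wo_le b a -> hom (D a) (D b)) : Prop :=
  IsChain W D Dm /\
  (forall a, wo_is_min a -> IsTerminal (D a)) /\
  (exists se : forall a b : W, wo_is_succ b a -> D a = H0 (D b),
     forall a a' b b' (sa : wo_is_succ a a') (sb : wo_is_succ b b')
            (p : wo_le b' a') (q : wo_le b a),
       hcast (se a' a sa) (se b' b sb) (Dm a' b' p) = H1 (D a) (D b) (Dm a b q)) /\
  (forall a, wo_is_limit a -> IsLimitBelow W D Dm a).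

Definition FinalSeqConverges {C : Category} (H0 : C -> C)
  (H1 : forall Y Y' : C, hom Y Y' -> hom (H0 Y) (H0 Y')) : Prop :=
  exists (W : WellOrder) (D : W -> C) (Dm : forall a b : W, wo_le b a -> hom (D a) (D b)),
    IsFinalSeqOn H0 H1 W D Dm /\
    exists (a a' : W) (sa : wo_is_succ a a'), IsIso (Dm a' a (or_introl (proj1 sa))).

Definition IsFinalCoalgebra {C : Category} (H0 : C -> C)
  (H1 : forall Y Y' : C, hom Y Y' -> hom (H0 Y) (H0 Y')) (Z : C) (z : hom Z (H0 Z)) : Prop :=
  forall (A : C) (a : hom A (H0 A)),
    exists h : hom A Z, cmp z h = cmp (H1 A Z h) a /\
      (forall h' : hom A Z, cmp z h' = cmp (H1 A Z h') a -> h' = h).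

Definition BFix {C : Category} (B0 : C -> C -> C)
  (B1 : forall X X' Y Y' : C, hom X' X -> hom Y Y' -> hom (B0 X Y) (B0 X' Y')) (X : C) :
  forall Y Y' : C, hom Y Y' -> hom (B0 X Y) (B0 X Y') :=
  fun Y Y' g => B1 X X Y Y' (idm X) g.

Definition IsLocallyFinalCoalgebra {C : Category} (B0 : C -> C -> C)
  (B1 : forall X X' Y Y' : C, hom X' X -> hom Y Y' -> hom (B0 X Y) (B0 X' Y'))
  (Z : C) (z : hom Z (B0 Z Z)) : Prop :=
  IsFinalCoalgebra (B0 Z) (BFix B0 B1 Z) Z z.

(* Main.v *)
Require Import Defs.
From Stdlib Require Import Reals Lra Lia ProofIrrelevance Classical ClassicalEpsilon.
Open Scope R_scope.

Section Basics.
Variable C : MCategory.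

Lemma d_nonneg (X Y : C) (f g : hom X Y) : 0 <= mdist f g.
Proof. destruct (mdist_ultra C X Y) as [H _]. apply H. Qed.
Lemma d_le1 (X Y : C) (f g : hom X Y) : mdist f g <= 1.
Proof. destruct (mdist_ultra C X Y) as [H _]. apply H. Qed.
Lemma d_refl (X Y : C) (f : hom X Y) : mdist f f = 0.
Proof. destruct (mdist_ultra C X Y) as [_ [H _]]. apply H; reflexivity. Qed.
Lemma d_eq (X Y : C) (f g : hom X Y) : mdist f g = 0 -> f = g.
Proof. destruct (mdist_ultra C X Y) as [_ [H _]]. apply H. Qed.
Lemma d_sym (X Y : C) (f g : hom X Y) : mdist f g = mdist g f.
Proof. destruct (mdist_ultra C X Y) as [_ [_ [H _]]]. apply H. Qed.
Lemma d_ultra (X Y : C) (f g h : hom X Y) : mdist f h <= Rmax (mdist f g) (mdist g h).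
Proof. destruct (mdist_ultra C X Y) as [_ [_ [_ H]]]. apply H. Qed.
Lemma d_tri (X Y : C) (f g h : hom X Y) r : mdist f g <= r -> mdist g h <= r -> mdist f h <= r.
Proof. intros. eapply Rle_trans. apply d_ultra with (g:=g). apply Rmax_lub; auto. Qed.
Lemma d_le0 (X Y : C) (f g : hom X Y) : mdist f g <= 0 -> f = g.
Proof. intros. apply d_eq. pose proof (d_nonneg _ _ f g). lra. Qed.
Lemma cmp_ne (X Y Z : C) (g g' : hom Y Z) (f f' : hom X Y) r :
  mdist g g' <= r -> mdist f f' <= r -> mdist (cmp g f) (cmp g' f') <= r.
Proof. intros. eapply Rle_trans. apply mdist_comp_nonexp. apply Rmax_lub; auto. Qed.
Lemma cmp_ne_l (X Y Z : C) (g g' : hom Y Z) (f : hom X Y) :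
  mdist (cmp g f) (cmp g' f) <= mdist g g'.
Proof. apply cmp_ne. lra. rewrite d_refl. apply d_nonneg. Qed.
Lemma cmp_ne_r (X Y Z : C) (g : hom Y Z) (f f' : hom X Y) :
  mdist (cmp g f) (cmp g f') <= mdist f f'.
Proof. apply cmp_ne. rewrite d_refl. apply d_nonneg. lra. Qed.
End Basics.

Lemma pow_decr (c : R) m n : 0 <= c <= 1 -> (m <= n)%nat -> c ^ n <= c ^ m.
Proof.
  intros Hc Hmn. induction Hmn. lra.
  simpl. pose proof (pow_le c m0 (proj1 Hc)). nra.
Qed.

Lemma pow_small (c : R) : 0 <= c < 1 -> forall eps, 0 < eps -> exists N, forall n, (N <= n)%nat -> c ^ n < eps.
Proof.
  intros Hc eps He. destruct (pow_lt_1_zero c) with (y:=eps) as [N HN].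
  rewrite Rabs_pos_eq; lra. auto.
  exists N. intros n Hn. specialize (HN n Hn). rewrite Rabs_pos_eq in HN; auto.
  apply pow_le; lra.
Qed.

Lemma le_pow_all (c x : R) N : 0 <= c < 1 -> (forall n, (N <= n)%nat -> x <= c ^ n) -> x <= 0.
Proof.
  intros Hc H. destruct (Rle_or_lt x 0); auto.
  destruct (pow_small c Hc x H0) as [M HM].
  specialize (HM (Nat.max N M) ltac:(lia)). specialize (H (Nat.max N M) ltac:(lia)). lra.
Qed.

Section Limits.
Variable C : MCategory.
Variables (X Y : C) (c : R).
Hypothesis Hc : 0 <= c < 1.

Definition climit (s : nat -> hom X Y) (l : hom X Y) := forall n, @mdist C X Y (s n) l <= c ^ n.

Lemma climit_unique s l1 l2 N : (forall n, (N <= n)%nat -> @mdist C X Y (s n) l1 <= c ^ n) ->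
  (forall n, (N <= n)%nat -> @mdist C X Y (s n) l2 <= c ^ n) -> l1 = l2.
Proof.
  intros H1 H2. apply d_le0. apply (le_pow_all c _ N Hc). intros n Hn.
  apply d_tri with (g := s n). rewrite d_sym. auto. auto.
Qed.

Lemma cauchy_geo (s : nat -> hom X Y) : (forall n, @mdist C X Y (s n) (s (S n)) <= c ^ n) ->
  forall m n, (m <= n)%nat -> @mdist C X Y (s m) (s n) <= c ^ m.
Proof.
  intros H m n Hmn. induction Hmn. rewrite d_refl. apply pow_le; lra.
  apply d_tri with (g := s m0). auto. eapply Rle_trans. apply H. apply pow_decr; [lra|lia].
Qed.

Lemma climit_exists (s : nat -> hom X Y) : (forall n, @mdist C X Y (s n) (s (S n)) <= c ^ n) ->
  exists l, climit s l.
Proof.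
  intros H. destruct (mdist_complete C X Y s) as [l Hl].
  { intros eps He. destruct (pow_small c Hc eps He) as [N HN]. exists N. intros m n Hm Hn.
    destruct (Nat.le_ge_cases m n).
    - eapply Rle_lt_trans. apply cauchy_geo; auto. apply HN; auto.
    - rewrite d_sym. eapply Rle_lt_trans. apply cauchy_geo; auto. apply HN; auto. }
  exists l. intros n.
  assert (forall eps, 0 < eps -> @mdist C X Y (s n) l <= c ^ n + eps).
  { intros eps He. destruct (Hl eps He) as [N HN].
    apply d_tri with (g := s (Nat.max n N)).
    - pose proof (cauchy_geo s H n (Nat.max n N) (Nat.le_max_l _ _)). lra.
    - pose proof (HN (Nat.max n N) (Nat.le_max_r _ _)). pose proof (pow_le c n (proj1 Hc)). lra. }
  destruct (Rle_or_lt (mdist (s n) l) (c ^ n)); auto.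
  specialize (H0 ((mdist (s n) l - c ^ n)/2) ltac:(lra)). lra.
Qed.

End Limits.

Lemma banach (C : MCategory) (X Y : C) (c : R) (Hc : 0 <= c < 1)
  (G : hom X Y -> hom X Y) (HG : forall f g, mdist (G f) (G g) <= c * mdist f g)
  (x0 : hom X Y) : exists x, G x = x.
Proof.
  set (s := fun n => Nat.iter n G x0).
  assert (Hs : forall n, @mdist C X Y (s n) (s (S n)) <= c ^ n).
  { induction n. simpl. apply d_le1. change (s (S (S n))) with (G (s (S n))).
    change (s (S n)) with (G (s n)) at 1. eapply Rle_trans. apply HG.
    simpl. apply Rmult_le_compat_l; [lra| exact IHn]. }
  destruct (climit_exists C X Y c Hc s Hs) as [l Hl].
  exists l. apply (climit_unique C X Y c Hc s _ _ 1); [|intros; apply Hl].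
  intros n Hn. destruct n. lia. change (s (S n)) with (G (s n)).
  eapply Rle_trans. apply HG. simpl. apply Rmult_le_compat_l; [lra|]. apply Hl.
Qed.

Definition kap {C : Category} {X Y : C} (e : X = Y) : hom X Y := hcast eq_refl e (idm X).

Lemma hcast_kap {C : Category} {X X' Y Y' : C} (e1 : X = X') (e2 : Y = Y') (f : hom X Y) :
  hcast e1 e2 f = cmp (kap e2) (cmp f (kap (eq_sym e1))).
Proof. destruct e1, e2. unfold kap; simpl. rewrite comp_idl, comp_idr. reflexivity. Qed.

Lemma kap_l {C : Category} {X Y : C} (e : X = Y) : cmp (kap (eq_sym e)) (kap e) = idm X.
Proof. destruct e. unfold kap; simpl. apply comp_idl. Qed.
Lemma kap_r {C : Category} {X Y : C} (e : X = Y) : cmp (kap e) (kap (eq_sym e)) = idm Y.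
Proof. destruct e. unfold kap; simpl. apply comp_idl. Qed.

Section WO.
Variable W : WellOrder.
Lemma wo_irrefl (x : W) : ~ wo_lt x x.
Proof. intro H. induction (wo_wf W x) as [x _ IH]. eapply IH; eauto. Qed.
Lemma wo_asym (x y : W) : wo_lt x y -> wo_lt y x -> False.
Proof. intros. apply (wo_irrefl x). eapply wo_trans; eauto. Qed.
Lemma wo_le_trans (x y z : W) : wo_le x y -> wo_le y z -> wo_le x z.
Proof. unfold wo_le. intros [H|H] [H'|H']; subst; auto. left; eapply wo_trans; eauto. Qed.
Lemma wo_lt_le_trans (x y z : W) : wo_lt x y -> wo_le y z -> wo_lt x z.
Proof. unfold wo_le. intros H [H'|H']; subst; auto. eapply wo_trans; eauto. Qed.
Lemma wo_le_lt_trans (x y z : W) : wo_le x y -> wo_lt y z -> wo_lt x z.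
Proof. unfold wo_le. intros [H|H] H'; subst; auto. eapply wo_trans; eauto. Qed.
Lemma wo_le_refl (x : W) : wo_le x x.
Proof. right; reflexivity. Qed.
Lemma succ_pred (b0 b x : W) : wo_is_succ b0 b -> wo_lt x b -> wo_le x b0.
Proof.
  intros [H1 H2] Hx. destruct (wo_total W x b0) as [H|[H|H]].
  left; auto. right; auto. exfalso; eapply H2; eauto.
Qed.
Lemma succ_uniq (b0 b1 b : W) : wo_is_succ b0 b -> wo_is_succ b1 b -> b0 = b1.
Proof.
  intros H0 H1. destruct (succ_pred b0 b b1 H0 (proj1 H1)) as [H|H]; auto.
  destruct (succ_pred b1 b b0 H1 (proj1 H0)) as [H'|H']; auto.
  exfalso; eapply wo_asym; eauto.
Qed.
Lemma classify (b : W) : wo_is_min b \/ (exists b0, wo_is_succ b0 b) \/ wo_is_limit b.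
Proof.
  destruct (classic (wo_is_min b)); auto.
  destruct (classic (exists b0, wo_is_succ b0 b)); auto.
  right; right. split; auto. intros b0 Hs. apply H0; eauto.
Qed.
Lemma not_min_ex (b : W) : ~ wo_is_min b -> exists b0, wo_lt b0 b.
Proof. intros H. apply NNPP. intro H'. apply H. intros b0 Hb. apply H'; eauto. Qed.
Lemma le_lt_dec (x y : W) : wo_le x y -> x = y \/ wo_lt x y.
Proof. intros [H|H]; auto. Qed.
End WO.

Section FS.
Variable C : MCategory.
Hypothesis Hstab : IsStable C.
Variables (H0 : C -> C) (H1 : forall Y Y' : C, hom Y Y' -> hom (H0 Y) (H0 Y')).
Hypothesis H1id : forall Y, H1 Y Y (idm Y) = idm (H0 Y).
Hypothesis H1cmp : forall (Y Y' Y'' : C) (f : hom Y Y') (g : hom Y' Y''),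
  H1 Y Y'' (cmp g f) = cmp (H1 Y' Y'' g) (H1 Y Y' f).
Hypothesis H1ne : forall (Y Y' : C) (f g : hom Y Y'), mdist (H1 Y Y' f) (H1 Y Y' g) <= mdist f g.
Variables (W : WellOrder) (D : W -> C) (Dm : forall a b : W, wo_le b a -> hom (D a) (D b)).
Hypothesis Hfs : IsFinalSeqOn H0 H1 W D Dm.

Lemma Dm_pi (a b : W) p q : Dm a b p = Dm a b q.
Proof. rewrite (proof_irrelevance _ p q). reflexivity. Qed.
Lemma Dm_id (a : W) p : Dm a a p = idm (D a).
Proof. destruct Hfs as [[H _] _]. apply H. Qed.
Lemma Dm_cmp (a b c : W) p q r : cmp (Dm b c q) (Dm a b p) = Dm a c r.
Proof. destruct Hfs as [[_ H] _]. apply H. Qed.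
Lemma Dm_cmpA (A : C) (a b c : W) p q r (f : hom A (D a)) : cmp (Dm b c q) (cmp (Dm a b p) f) = cmp (Dm a c r) f.
Proof. rewrite comp_assoc. rewrite (Dm_cmp a b c p q r). reflexivity. Qed.

Definition se : forall a b : W, wo_is_succ b a -> D a = H0 (D b) :=
  proj1_sig (constructive_indefinite_description _ (proj1 (proj2 (proj2 Hfs)))).
Lemma se_prop : forall a a' b b' (sa : wo_is_succ a a') (sb : wo_is_succ b b')
            (p : wo_le b' a') (q : wo_le b a),
       hcast (se a' a sa) (se b' b sb) (Dm a' b' p) = H1 (D a) (D b) (Dm a b q).
Proof. exact (proj2_sig (constructive_indefinite_description _ (proj1 (proj2 (proj2 Hfs))))). Qed.

Definition K (b0 b : W) (s : wo_is_succ b0 b) : hom (H0 (D b0)) (D b) := kap (eq_sym (se b b0 s)).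
Definition Ki (b0 b : W) (s : wo_is_succ b0 b) : hom (D b) (H0 (D b0)) := kap (se b b0 s).
Lemma K_Ki (b0 b : W) s : cmp (K b0 b s) (Ki b0 b s) = idm _.
Proof. apply kap_l. Qed.
Lemma Ki_K (b0 b : W) s : cmp (Ki b0 b s) (K b0 b s) = idm _.
Proof. apply kap_r. Qed.
Lemma K_pi (b0 b : W) s s' : K b0 b s = K b0 b s'.
Proof. rewrite (proof_irrelevance _ s s'). reflexivity. Qed.

Lemma succ_le (a a' b b' : W) : wo_is_succ a a' -> wo_is_succ b b' -> wo_le b' a' -> wo_le b a.
Proof.
  intros sa sb p. apply (succ_pred W a a' b sa). eapply wo_lt_le_trans. apply sb. auto.
Qed.

Lemma Lnat (a a' b b' : W) (sa : wo_is_succ a a') (sb : wo_is_succ b b') (p : wo_le b' a') (q : wo_le b a) :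
  cmp (Dm a' b' p) (K a a' sa) = cmp (K b b' sb) (H1 _ _ (Dm a b q)).
Proof.
  pose proof (se_prop a a' b b' sa sb p q) as E. rewrite hcast_kap in E.
  rewrite <- E. fold (K a a' sa). fold (Ki b b' sb).
  rewrite !comp_assoc. rewrite K_Ki, comp_idl. reflexivity.
Qed.

Lemma term_eq (X : C) (A : C) (f g : hom A X) : IsTerminal X -> f = g.
Proof. intros [_ H]. apply H. Qed.

Lemma seq_est (A : C) (bnd : W) (f g : hom A (D bnd)) (r : R) : 0 <= r ->
  (forall (b b0 : W) (s : wo_is_succ b0 b) (hb : wo_le b bnd) (hb0 : wo_le b0 bnd),
     mdist (cmp (Dm bnd b0 hb0) f) (cmp (Dm bnd b0 hb0) g) <= r ->
     mdist (cmp (Dm bnd b hb) f) (cmp (Dm bnd b hb) g) <= r) ->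
  forall (b : W) (hb : wo_le b bnd), mdist (cmp (Dm bnd b hb) f) (cmp (Dm bnd b hb) g) <= r.
Proof.
  intros Hr Hstep b. induction (wo_wf W b) as [b _ IH]. intros hb.
  destruct (classify W b) as [Hm|[[b0 Hs]|Hl]].
  - destruct Hfs as [_ [Hmin _]]. rewrite (term_eq _ _ _ (cmp (Dm bnd b hb) g) (Hmin b Hm)).
    rewrite d_refl. auto.
  - assert (hb0 : wo_le b0 bnd) by (left; eapply wo_lt_le_trans; [apply Hs|auto]).
    apply (Hstep b b0 Hs hb hb0). apply IH. apply Hs.
  - destruct Hfs as [_ [_ [_ Hlim]]]. specialize (Hlim b Hl).
    set (I := {x : W | wo_lt x b}).
    set (Ci := fun i : I => D (proj1_sig i)).
    set (h := fun i : I => Dm b (proj1_sig i) (or_introl (proj2_sig i)) : hom (D b) (Ci i)).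
    assert (HI : inhabited I).
    { destruct (not_min_ex W b (proj1 Hl)) as [x Hx]. constructor. exact (exist _ x Hx). }
    assert (HJ : JointlyMonic Ci h).
    { intros A' u v Huv.
      destruct (Hlim A' (fun x hx => cmp (Dm b x (or_introl hx)) u)) as [w [Hw1 Hw2]].
      { intros x x' hx hx' p. rewrite comp_assoc. apply f_equal2; auto. apply Dm_cmp. }
      rewrite (Hw2 u (fun _ _ => eq_refl)). symmetry. apply Hw2.
      intros x hx. exact (eq_sym (Huv (exist _ x hx))). }
    destruct (Hstab A (D b) (cmp (Dm bnd b hb) f) (cmp (Dm bnd b hb) g) I Ci h HI HJ) as [_ Hlub].
    apply Hlub. intros x [i ->]. unfold h. destruct i as [x hx]; simpl.
    assert (hx' : wo_le x bnd) by (left; eapply wo_lt_le_trans; eauto).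
    rewrite !(Dm_cmpA _ _ _ _ _ _ hx'). apply IH; auto.
Qed.

Lemma seq_eq (A : C) (bnd : W) (f g : hom A (D bnd)) :
  (forall (b b0 : W) (s : wo_is_succ b0 b) (hb : wo_le b bnd) (hb0 : wo_le b0 bnd),
     cmp (Dm bnd b0 hb0) f = cmp (Dm bnd b0 hb0) g ->
     cmp (Dm bnd b hb) f = cmp (Dm bnd b hb) g) ->
  forall (b : W) (hb : wo_le b bnd), cmp (Dm bnd b hb) f = cmp (Dm bnd b hb) g.
Proof.
  intros Hs b hb. apply d_le0. apply (seq_est A bnd f g 0 (Rle_refl 0)); auto.
  intros. rewrite (Hs b0 b1 s hb0 hb1 (d_le0 _ _ _ _ _ H)). rewrite d_refl. lra.
Qed.

Lemma seq_eq_top (A : C) (bnd : W) (f g : hom A (D bnd)) :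
  (forall (b b0 : W) (s : wo_is_succ b0 b) (hb : wo_le b bnd) (hb0 : wo_le b0 bnd),
     cmp (Dm bnd b0 hb0) f = cmp (Dm bnd b0 hb0) g ->
     cmp (Dm bnd b hb) f = cmp (Dm bnd b hb) g) -> f = g.
Proof.
  intros Hs. pose proof (seq_eq A bnd f g Hs bnd (wo_le_refl W bnd)).
  rewrite Dm_id, !comp_idl in H. auto.
Qed.

Section Good.
Variables (A : C) (alpha : hom A (H0 A)).

Definition Good (b : W) (f : hom A (D b)) : Prop :=
  forall (x x0 : W) (s : wo_is_succ x0 x) (hx : wo_le x b) (hx0 : wo_le x0 b),
    cmp (Dm b x hx) f = cmp (K x0 x s) (cmp (H1 _ _ (cmp (Dm b x0 hx0) f)) alpha).

Lemma Good_unique (b : W) f g : Good b f -> Good b g -> f = g.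
Proof.
  intros Hf Hg. apply seq_eq_top. intros x x0 s hx hx0 E.
  rewrite (Hf x x0 s hx hx0), (Hg x x0 s hx hx0), E. reflexivity.
Qed.

Lemma Good_down (b b1 : W) (p : wo_le b1 b) f : Good b f -> Good b1 (cmp (Dm b b1 p) f).
Proof.
  intros Hf x x0 s hx hx0.
  rewrite !(Dm_cmpA _ _ _ _ _ _ (wo_le_trans W _ _ _ hx p)).
  rewrite !(Dm_cmpA _ _ _ _ _ _ (wo_le_trans W _ _ _ hx0 p)). apply Hf.
Qed.

Lemma Good_exists (b : W) : exists f, Good b f.
Proof.
  induction (wo_wf W b) as [b _ IH].
  destruct (classify W b) as [Hm|[[b0 Hs]|Hl]].
  - destruct Hfs as [_ [Hmin _]]. destruct (proj1 (Hmin b Hm) A) as [f].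
    exists f. intros x x0 s hx hx0. exfalso.
    apply (Hm x0). eapply wo_lt_le_trans. apply s. auto.
  - destruct (IH b0 (proj1 Hs)) as [f0 Hf0].
    set (f := cmp (K b0 b Hs) (cmp (H1 _ _ f0) alpha)).
    assert (hb0 : wo_le b0 b) by (left; apply Hs).
    assert (Cl : forall x (hx : wo_le x b0),
               cmp (Dm b0 x hx) (cmp (Dm b b0 hb0) f) = cmp (Dm b0 x hx) f0).
    { apply seq_eq. intros x x0 s hx hx0 _.
      rewrite (Dm_cmpA _ _ _ _ _ _ (wo_le_trans W _ _ _ hx hb0)).
      unfold f. rewrite comp_assoc.
      rewrite (Lnat b0 b x0 x Hs s _ hx0). rewrite <- comp_assoc.
      rewrite (comp_assoc _ _ _ _ _ (H1 _ _ _) (H1 _ _ _)).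
      rewrite <- H1cmp. symmetry. apply Hf0. }
    assert (Cl' : forall x (hx : wo_le x b) (hx' : wo_le x b0),
               cmp (Dm b x hx) f = cmp (Dm b0 x hx') f0).
    { intros. rewrite <- (Cl x hx'). symmetry. apply Dm_cmpA. }
    assert (Ctop : cmp (Dm b b0 hb0) f = f0).
    { rewrite <- (comp_idl _ _ _ (cmp (Dm b b0 hb0) f)). rewrite <- (Dm_id b0 (wo_le_refl W b0)).
      rewrite Cl. rewrite Dm_id. apply comp_idl. }
    exists f. intros x x0 s hx hx0.
    destruct (le_lt_dec W _ _ hx) as [E|Hlt].
    + subst x. assert (x0 = b0) by (eapply succ_uniq; eauto). subst x0.
      rewrite Dm_id, comp_idl. rewrite (Dm_pi _ _ hx0 hb0), Ctop.
      unfold f. rewrite (K_pi _ _ s Hs). reflexivity.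
    + assert (hx' : wo_le x b0) by (eapply succ_pred; eauto).
      assert (hx0' : wo_le x0 b0) by (eapply wo_le_trans; [left; apply s| auto]).
      rewrite (Cl' x hx hx'), (Cl' x0 hx0 hx0'). apply Hf0.
  - set (c := fun x (hx : wo_lt x b) => proj1_sig (constructive_indefinite_description _ (IH x hx))).
    assert (Hc : forall x hx, Good x (c x hx)).
    { intros. exact (proj2_sig (constructive_indefinite_description _ (IH x hx))). }
    assert (Hcomp : forall x x' hx hx' (p : wo_le x' x), cmp (Dm x x' p) (c x hx) = c x' hx').
    { intros. apply Good_unique. apply Good_down. auto. auto. }
    destruct Hfs as [_ [_ [_ Hlim]]].
    destruct (Hlim b Hl A c Hcomp) as [u [Hu _]].
    exists u. intros x x0 s hx hx0.
    destruct (le_lt_dec W _ _ hx) as [E|Hlt].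
    + subst x. exfalso. apply (proj2 Hl x0 s).
    + assert (Hlt0 : wo_lt x0 x) by apply s.
      assert (Hlt0' : wo_lt x0 b) by (eapply wo_trans; eauto).
      rewrite (Dm_pi _ _ hx (or_introl Hlt)), Hu.
      rewrite (Dm_pi _ _ hx0 (or_introl Hlt0')), Hu.
      pose proof (Hc x Hlt x x0 s (wo_le_refl W x) (or_introl Hlt0)) as G.
      rewrite Dm_id, comp_idl in G. rewrite G. rewrite (Hcomp x x0 Hlt Hlt0'). reflexivity.
Qed.
End Good.

Lemma fs_final (a a' : W) (sa : wo_is_succ a a') (Hiso : IsIso (Dm a' a (or_introl (proj1 sa)))) :
  exists (Z : C) (z : hom Z (H0 Z)),
    (forall (A : C) (alpha : hom A (H0 A)), exists h, cmp z h = cmp (H1 _ _ h) alpha) /\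
    (forall (A : C) (a1 a2 : hom A (H0 A)) (h1 h2 : hom A Z),
        cmp z h1 = cmp (H1 _ _ h1) a1 -> cmp z h2 = cmp (H1 _ _ h2) a2 ->
        mdist h1 h2 <= mdist a1 a2).
Proof.
  set (m := Dm a' a (or_introl (proj1 sa))). fold m in Hiso.
  destruct Hiso as [m' [Hm1 Hm2]].
  exists (D a), (cmp (Ki a a' sa) m'). split.
  - intros A alpha. destruct (Good_exists A alpha a') as [f Hf].
    exists (cmp m f).
    pose proof (Hf a' a sa (wo_le_refl W a') (or_introl (proj1 sa))) as G.
    rewrite Dm_id, comp_idl in G. fold m in G.
    rewrite <- comp_assoc. rewrite (comp_assoc _ _ _ _ _ m' m f), Hm1, comp_idl.
    rewrite G at 1. rewrite comp_assoc, Ki_K, comp_idl. reflexivity.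
  - intros A a1 a2 h1 h2 E1 E2.
    assert (Hm : forall x (hx : wo_le x a) (hx' : wo_le x a'), Dm a x hx = cmp (Dm a' x hx') m').
    { intros. rewrite <- (comp_idr _ _ _ (Dm a x hx)). rewrite <- Hm2.
      rewrite comp_assoc. unfold m. rewrite (Dm_cmp _ _ _ _ _ hx'). reflexivity. }
    pose proof (seq_est A a h1 h2 (mdist a1 a2) (d_nonneg _ _ _ _ _)) as S.
    rewrite <- (comp_idl _ _ _ h1), <- (comp_idl _ _ _ h2).
    rewrite <- (Dm_id a (wo_le_refl W a)). apply S.
    intros x x0 s hx hx0 IHx.
    assert (hx' : wo_le x a') by (eapply wo_le_trans; [apply hx| left; apply sa]).
    assert (Key : forall (h : hom A (D a)) al, cmp (Ki a a' sa) (cmp m' h) = cmp (H1 _ _ h) al ->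
              cmp (Dm a x hx) h = cmp (K x0 x s) (cmp (H1 _ _ (cmp (Dm a x0 hx0) h)) al)).
    { intros h al E. rewrite (Hm x hx hx'). rewrite <- comp_assoc.
      rewrite <- (comp_idl _ _ _ (cmp m' h)). rewrite <- (K_Ki a a' sa).
      rewrite <- comp_assoc. rewrite E. rewrite comp_assoc.
      rewrite (Lnat a a' x0 x sa s hx' hx0).
      rewrite <- comp_assoc, (comp_assoc _ _ _ _ _ (H1 _ _ _) (H1 _ _ _)), <- H1cmp.
      reflexivity. }
    rewrite <- comp_assoc in E1, E2.
    rewrite (Key h1 a1 E1), (Key h2 a2 E2).
    apply cmp_ne. rewrite d_refl; apply d_nonneg.
    apply cmp_ne. eapply Rle_trans. apply H1ne. auto. lra.
Qed.

End FS.

Lemma nat_total (x y : nat) : (x < y \/ x = y \/ y < x)%nat.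
Proof. lia. Qed.

Definition NW : WellOrder := {| wo_car := nat; wo_lt := lt; wo_wf := Wf_nat.lt_wf;
   wo_trans := Nat.lt_trans; wo_total := nat_total |}.

Lemma nw_le (b a : nat) : (b <= a)%nat -> @wo_le NW b a.
Proof. intros H. unfold wo_le. simpl. lia. Qed.
Lemma nw_le' (b a : nat) : @wo_le NW b a -> (b <= a)%nat.
Proof. unfold wo_le. simpl. lia. Qed.

Section Tower.
Variable C : MCategory.
Hypothesis Hstab : IsStable C.
Variables (T : C) (HT : IsTerminal T).
Hypothesis Hlim : HasChainLimits C.
Variables (F0 : C -> C) (F1 : forall X Y : C, hom X Y -> hom (F0 Y) (F0 X)).
Hypothesis F1id : forall X : C, F1 X X (idm X) = idm (F0 X).
Hypothesis F1cmp : forall (X Y Z : C) (f : hom X Y) (g : hom Y Z),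
  F1 X Z (cmp g f) = cmp (F1 X Y f) (F1 Y Z g).
Variables (c : R) (Hc : 0 <= c < 1).
Hypothesis F1con : forall (X Y : C) (f g : hom X Y), mdist (F1 X Y f) (F1 X Y g) <= c * mdist f g.
Variables (e0 : hom T (F0 T)) (p0 : hom (F0 T) T).

Lemma termT (A : C) (f g : hom A T) : f = g.
Proof. apply (proj2 HT). Qed.

Fixpoint X (n : nat) : C := match n with 0 => T | S n => F0 (X n) end.
Fixpoint ep (n : nat) : hom (X n) (X (S n)) * hom (X (S n)) (X n) :=
  match n return hom (X n) (X (S n)) * hom (X (S n)) (X n) with
  | 0 => (e0, p0)
  | S n => (F1 _ _ (snd (ep n)), F1 _ _ (fst (ep n)))
  end.
Definition e n := fst (ep n).
Definition p n := snd (ep n).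

Fixpoint tp (a : nat) : forall b, hom (X a) (X b) * hom (X b) (X a) :=
  match a return forall b, hom (X a) (X b) * hom (X b) (X a) with
  | 0 => fix tq b := match b return hom (X 0) (X b) * hom (X b) (X 0) with
         | 0 => (idm _, idm _)
         | S b' => (cmp (e b') (fst (tq b')), cmp (snd (tq b')) (p b'))
         end
  | S a' => fun b => match b return hom (X (S a')) (X b) * hom (X b) (X (S a')) with
         | 0 => (cmp (fst (tp a' 0)) (p a'), cmp (e a') (snd (tp a' 0)))
         | S b' => (F1 _ _ (snd (tp a' b')), F1 _ _ (fst (tp a' b')))
         end
  end.
Definition t a b := fst (tp a b).

Lemma tp0S b : tp 0 (S b) = (cmp (e b) (fst (tp 0 b)), cmp (snd (tp 0 b)) (p b)).
Proof. reflexivity. Qed.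
Lemma tpS0 a : tp (S a) 0 = (cmp (fst (tp a 0)) (p a), cmp (e a) (snd (tp a 0))).
Proof. reflexivity. Qed.
Lemma tpSS a b : tp (S a) (S b) = (F1 _ _ (snd (tp a b)), F1 _ _ (fst (tp a b))).
Proof. reflexivity. Qed.

Lemma tp_swap a : forall b, snd (tp a b) = t b a /\ t a b = snd (tp b a).
Proof.
  unfold t. induction a as [|a IH]; intros b.
  - induction b as [|b IHb]. auto. destruct IHb as [E1 E2].
    rewrite tp0S, tpS0. cbn [fst snd]. rewrite E1, E2. auto.
  - destruct b as [|b].
    + clear IH. induction a as [|a IHa]. auto.
      destruct IHa as [E1 E2]. rewrite tp0S, tpS0. cbn [fst snd]. rewrite E1, E2. auto.
    + rewrite !tpSS. cbn [fst snd]. destruct (IH b) as [E1 E2]. rewrite E1, E2. auto.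
Qed.

Lemma tSS a b : t (S a) (S b) = F1 _ _ (t b a).
Proof. unfold t at 1. rewrite tpSS. cbn [fst snd]. rewrite (proj1 (tp_swap a b)). reflexivity. Qed.
Lemma t0S b : t 0 (S b) = cmp (e b) (t 0 b).
Proof. reflexivity. Qed.
Lemma tS0 a : t (S a) 0 = cmp (t a 0) (p a).
Proof. reflexivity. Qed.

Lemma tt_id a : t a a = idm (X a).
Proof. induction a. reflexivity. rewrite tSS, IHa. apply F1id. Qed.

Lemma tn_ep n : t n (S n) = e n /\ t (S n) n = p n.
Proof.
  induction n as [|n [E1 E2]].
  - split. rewrite t0S. unfold t; simpl. apply comp_idr. rewrite tS0. unfold t; simpl. apply comp_idl.
  - rewrite !tSS, E1, E2. split; reflexivity.
Qed.

Lemma pe n : cmp (p n) (e n) = idm (X n).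
Proof.
  induction n. apply termT. change (cmp (F1 _ _ (e n)) (F1 _ _ (p n)) = idm (X (S n))). rewrite <- F1cmp, IHn. apply F1id.
Qed.

Lemma Lud n : (forall k, (n <= k)%nat -> t n (S k) = cmp (e k) (t n k)) /\
              (forall a, (n <= a)%nat -> t (S a) n = cmp (t a n) (p a)).
Proof.
  induction n as [|n [IHu IHd]].
  - split; intros; reflexivity.
  - split.
    + intros k Hk. destruct k as [|k]. lia. rewrite !tSS. rewrite (IHd k ltac:(lia)).
      rewrite F1cmp. reflexivity.
    + intros a Ha. destruct a as [|a]. lia. rewrite !tSS. rewrite (IHu a ltac:(lia)).
      rewrite F1cmp. reflexivity.
Qed.
Lemma Lup n k : (n <= k)%nat -> t n (S k) = cmp (e k) (t n k).
Proof. apply Lud. Qed.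
Lemma Ldown n a : (n <= a)%nat -> t (S a) n = cmp (t a n) (p a).
Proof. apply Lud. Qed.

Lemma comp_down c0 b a : (c0 <= b)%nat -> (b <= a)%nat -> cmp (t b c0) (t a b) = t a c0.
Proof.
  intros H1 H2. replace a with ((a - b) + b)%nat by lia. generalize (a - b)%nat. intros d.
  induction d. simpl. rewrite tt_id. apply comp_idr.
  simpl. rewrite (Ldown b) by lia. rewrite (Ldown c0) by lia. rewrite comp_assoc, IHd. reflexivity.
Qed.

Lemma up1 b j : (b < j)%nat -> cmp (t (S b) j) (e b) = t b j.
Proof.
  intros H. induction j. lia. destruct (Nat.eq_dec j b).
  - subst. rewrite tt_id, comp_idl. symmetry. apply tn_ep.
  - rewrite (Lup (S b)) by lia. rewrite (Lup b) by lia. rewrite <- comp_assoc, IHj by lia. reflexivity.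
Qed.

Lemma comp_up a b j : (a <= b)%nat -> cmp (t b j) (t a b) = t a j.
Proof.
  intros H. replace b with ((b - a) + a)%nat by lia. generalize (b - a)%nat. intros d.
  induction d. simpl. rewrite tt_id. apply comp_idr.
  simpl. rewrite (Lup a) by lia. rewrite comp_assoc.
  destruct (Nat.le_gt_cases j (d + a)).
  - rewrite (Ldown j) by lia. rewrite <- (comp_assoc _ _ _ _ _ (t _ j)), pe, comp_idr. apply IHd.
  - rewrite up1 by lia. apply IHd.
Qed.

Lemma t_cone n a b : (b <= a)%nat -> cmp (t a b) (t n a) = t n b.
Proof.
  intros H. destruct (Nat.le_gt_cases n a).
  - apply comp_up; auto.
  - apply comp_down; lia.
Qed.

Lemma delta0 k : mdist (cmp (e k) (p k)) (idm (X (S k))) <= c ^ k.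
Proof.
  induction k. simpl. apply d_le1.
  change (mdist (cmp (F1 _ _ (p k)) (F1 _ _ (e k))) (idm (F0 (X (S k)))) <= c * c ^ k).
  rewrite <- F1cmp. rewrite <- (F1id (X (S k))).
  eapply Rle_trans. apply F1con. apply Rmult_le_compat_l. lra. exact IHk.
Qed.

Lemma delta n k : (n <= k)%nat -> mdist (cmp (t n k) (t k n)) (idm (X k)) <= c ^ n.
Proof.
  intros H. replace k with ((k - n) + n)%nat by lia. generalize (k - n)%nat. intros d.
  induction d. simpl. rewrite tt_id, comp_idl, d_refl. apply pow_le; lra.
  simpl. rewrite (Lup n) by lia. rewrite (Ldown n) by lia.
  apply d_tri with (g := cmp (e (d + n)) (p (d + n))).
  - rewrite <- comp_assoc. apply cmp_ne. rewrite d_refl; apply pow_le; lra.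
    rewrite comp_assoc. rewrite <- (comp_idl _ _ _ (p (d + n))) at 2.
    apply cmp_ne. auto. rewrite d_refl; apply pow_le; lra.
  - eapply Rle_trans. apply delta0. apply pow_decr; [lra|lia].
Qed.

Definition Dmt (a b : NW) (_ : wo_le b a) : hom (X a) (X b) := t a b.

Lemma chain_t : IsChain NW X Dmt.
Proof.
  split.
  - intros a q. apply tt_id.
  - intros a b c0 p1 q r. unfold Dmt. apply comp_down; apply nw_le'; auto.
Qed.

Theorem tower_fix : exists (L : C) (phi : hom L (F0 L)) (psi : hom (F0 L) L),
  cmp psi phi = idm L /\ cmp phi psi = idm (F0 L).
Proof.
  destruct (Hlim NW X Dmt chain_t) as [L [pi [Hcone Huniv]]].
  assert (Hc' : forall a b : nat, (b <= a)%nat -> cmp (t a b) (pi a) = pi b).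
  { intros a b H. apply (Hcone a b (nw_le _ _ H)). }
  assert (JM : forall (A : C) (u v : hom A L), (forall k : nat, cmp (pi k) u = cmp (pi k) v) -> u = v).
  { intros A u v Huv. destruct (Huniv A (fun k => cmp (pi k) u)) as [w [_ Hw]].
    { intros a b q. rewrite comp_assoc. f_equal. apply Hcone. }
    rewrite (Hw u (fun _ => eq_refl)). symmetry. apply Hw. intros; symmetry; auto. }
  assert (Hiota : forall n, {i : hom (X n) L | forall j, cmp (pi j) i = t n j}).
  { intros n. apply constructive_indefinite_description.
    destruct (Huniv (X n) (fun j => t n j)) as [i [Hi _]].
    { intros a b q. apply t_cone. apply nw_le'; auto. }
    exists i. exact Hi. }
  set (iota := fun n => proj1_sig (Hiota n)).
  assert (Hio : forall n j, cmp (pi j) (iota n) = t n j) by (intros; apply (proj2_sig (Hiota n))).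
  assert (Hio2 : forall m n, (m <= n)%nat -> cmp (iota n) (t m n) = iota m).
  { intros m n H. apply JM. intros j. rewrite comp_assoc, !Hio. apply comp_up; auto. }
  assert (Hip : forall n, mdist (cmp (iota n) (pi n)) (idm L) <= c ^ n).
  { intros n. assert (HI : inhabited nat) by (constructor; exact 0%nat).
    assert (HJ : @JointlyMonic C L nat X pi) by (intros A u v; apply JM).
    destruct (Hstab L L (cmp (iota n) (pi n)) (idm L) nat X pi HI HJ) as [_ Hlub].
    apply Hlub. intros r [k ->]. rewrite comp_assoc, Hio, comp_idr.
    destruct (Nat.le_gt_cases k n).
    - rewrite Hc' by auto. rewrite d_refl. apply pow_le; lra.
    - rewrite <- (Hc' k n) by lia. rewrite comp_assoc.
      rewrite <- (comp_idl _ _ _ (pi k)) at 2. eapply Rle_trans. apply cmp_ne_l.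
      apply delta. lia. }
  set (cpsi := fun j => match j return hom (F0 L) (X j) with
                        | O => cmp (t 1 0) (F1 _ _ (iota O))
                        | S j' => F1 _ _ (iota j') end).
  destruct (Huniv (F0 L) cpsi) as [psi [Hpsi _]].
  { intros a b q. simpl in a, b. destruct b as [|b]. apply termT.
    destruct a as [|a]. exfalso. apply nw_le' in q. lia.
    unfold Dmt. simpl. rewrite tSS, <- F1cmp. rewrite Hio2. reflexivity. apply nw_le' in q. lia. }
  set (s := fun n => cmp (F1 _ _ (pi n)) (pi (S n))).
  assert (Hs : forall n, mdist (s n) (s (S n)) <= c ^ n).
  { intros n.
    assert (A1 : s n = cmp (F1 _ _ (cmp (e n) (pi n))) (pi (S (S n)))).
    { unfold s. rewrite <- (Hc' (S (S n)) (S n)) by lia. rewrite tSS, (proj1 (tn_ep n)), comp_assoc. rewrite <- (F1cmp L (X n) (X (S n))). reflexivity. }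
    assert (A2 : pi n = cmp (p n) (pi (S n))).
    { rewrite <- (proj2 (tn_ep n)). symmetry. apply Hc'. lia. }
    rewrite A1. unfold s. eapply Rle_trans. apply cmp_ne_l. eapply Rle_trans. apply F1con.
    apply Rle_trans with (c * c ^ n). apply Rmult_le_compat_l. lra.
    rewrite A2, comp_assoc. rewrite <- (comp_idl _ _ _ (pi (S n))) at 2.
    eapply Rle_trans. apply cmp_ne_l. apply delta0.
    pose proof (pow_le c n (proj1 Hc)). nra. }
  destruct (climit_exists C L (F0 L) c Hc s Hs) as [phi Hphi].
  exists L, phi, psi. split.
  - apply JM. intros k. rewrite comp_idr. rewrite comp_assoc, Hpsi.
    destruct k as [|k]. apply termT. simpl.
    apply (climit_unique C L (X (S k)) c Hc (fun n => cmp (F1 _ _ (iota k)) (s n)) _ _ k).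
    + intros n _. eapply Rle_trans. apply cmp_ne_r. apply Hphi.
    + intros n Hn. replace (cmp (F1 _ _ (iota k)) (s n)) with (cmp (t (S n) (S k)) (pi (S n))).
      rewrite Hc' by lia. rewrite d_refl. apply pow_le; lra.
      unfold s. rewrite tSS, comp_assoc. rewrite <- (F1cmp (X k) L (X n)). rewrite Hio. reflexivity.
  - apply (climit_unique C (F0 L) (F0 L) c Hc (fun n => cmp (s n) psi) _ _ 0).
    + intros n _. eapply Rle_trans. apply cmp_ne_l. apply Hphi.
    + intros n _. replace (cmp (s n) psi) with (F1 _ _ (cmp (iota n) (pi n))).
      2:{ unfold s. rewrite F1cmp. rewrite <- comp_assoc. f_equal. symmetry. exact (Hpsi (S n)). }
      rewrite <- (F1id L). eapply Rle_trans. apply F1con.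
      apply Rle_trans with (c * c ^ n). apply Rmult_le_compat_l. lra. apply Hip.
      pose proof (pow_le c n (proj1 Hc)). nra.
Qed.

End Tower.

Section Main.
Variable C : MCategory.
Hypothesis Hstab : IsStable C.
Variables (B0 : C -> C -> C)
  (B1 : forall X X' Y Y' : C, hom X' X -> hom Y Y' -> hom (B0 X Y) (B0 X' Y')).
Hypothesis Hbif : IsBifunctor B0 B1.
Variables (c : R) (Hc : 0 <= c < 1).
Hypothesis Hcon : forall (X X' Y : C) (f g : hom X X'),
      mdist (B1 X' X Y Y f (idm Y)) (B1 X' X Y Y g (idm Y)) <= c * mdist f g.
Hypothesis Hne : LocNonExpansiveSnd B0 B1.
Hypothesis Hconv : forall X : C, FinalSeqConverges (B0 X) (BFix B0 B1 X).

Lemma Bid X Y : B1 X X Y Y (idm X) (idm Y) = idm (B0 X Y).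
Proof. apply Hbif. Qed.
Lemma Blaw (X X' X'' Y Y' Y'' : C) (f : hom X' X) (f' : hom X'' X') (g : hom Y Y') (g' : hom Y' Y'') :
  B1 X X'' Y Y'' (cmp f f') (cmp g' g) = cmp (B1 X' X'' Y' Y'' f' g') (B1 X X' Y Y' f g).
Proof. apply Hbif. Qed.
Lemma Bx1 (X X' Y Y' : C) (f : hom X' X) (g : hom Y Y') :
  B1 X X' Y Y' f g = cmp (B1 X' X' Y Y' (idm X') g) (B1 X X' Y Y f (idm Y)).
Proof. rewrite <- Blaw. rewrite comp_idr, comp_idr. reflexivity. Qed.
Lemma Bx2 (X X' Y Y' : C) (f : hom X' X) (g : hom Y Y') :
  B1 X X' Y Y' f g = cmp (B1 X X' Y' Y' f (idm Y')) (B1 X X Y Y' (idm X) g).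
Proof. rewrite <- Blaw. rewrite comp_idl, comp_idl. reflexivity. Qed.
Lemma Bff (X X' X'' Y : C) (f : hom X' X) (f' : hom X'' X') :
  cmp (B1 X' X'' Y Y f' (idm Y)) (B1 X X' Y Y f (idm Y)) = B1 X X'' Y Y (cmp f f') (idm Y).
Proof. rewrite <- Blaw. rewrite comp_idl. reflexivity. Qed.
Lemma Bgg (X Y Y' Y'' : C) (g : hom Y Y') (g' : hom Y' Y'') :
  cmp (B1 X X Y' Y'' (idm X) g') (B1 X X Y Y' (idm X) g) = B1 X X Y Y'' (idm X) (cmp g' g).
Proof. rewrite <- Blaw. rewrite comp_idl. reflexivity. Qed.

Definition H X := BFix B0 B1 X.

Definition NEfinal (X Z : C) (z : hom Z (B0 X Z)) : Prop :=
    (forall (A : C) (alpha : hom A (B0 X A)), exists h, cmp z h = cmp (H X _ _ h) alpha) /\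
    (forall (A : C) (a1 a2 : hom A (B0 X A)) (h1 h2 : hom A Z),
        cmp z h1 = cmp (H X _ _ h1) a1 -> cmp z h2 = cmp (H X _ _ h2) a2 ->
        mdist h1 h2 <= mdist a1 a2).

Lemma NE_uniq X Z z (HN : NEfinal X Z z) (A : C) (al : hom A (B0 X A)) (h1 h2 : hom A Z) :
  cmp z h1 = cmp (H X _ _ h1) al -> cmp z h2 = cmp (H X _ _ h2) al -> h1 = h2.
Proof.
  intros E1 E2. apply d_le0. eapply Rle_trans. apply (proj2 HN A al al h1 h2 E1 E2).
  rewrite d_refl. lra.
Qed.

Lemma exists_NE X : exists Z z, NEfinal X Z z.
Proof.
  destruct (Hconv X) as [W [D [Dm [Hfs [a [a' [sa Hiso]]]]]]].
  apply (fs_final C Hstab (B0 X) (H X)) with (W := W) (D := D) (Dm := Dm) (a := a) (a' := a') (sa := sa); auto.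
  - intros. unfold H, BFix. rewrite <- Blaw, comp_idl. reflexivity.
  - intros. apply Hne.
Qed.

Lemma final_NE X Z z : IsFinalCoalgebra (B0 X) (BFix B0 B1 X) Z z -> NEfinal X Z z.
Proof.
  intros Hf. destruct (exists_NE X) as [Y [y HY]].
  destruct (proj1 HY Z z) as [k Hk].
  destruct (Hf Y y) as [k' [Hk' _]].
  assert (Hkk : cmp k' k = idm Z).
  { destruct (Hf Z z) as [u [_ Hu]]. rewrite (Hu (idm Z)). apply Hu.
    rewrite comp_assoc, Hk', <- comp_assoc, Hk, comp_assoc. unfold H, BFix. rewrite Bgg. reflexivity.
    rewrite comp_idr. unfold BFix. rewrite Bid, comp_idl. reflexivity. }
  split.
  - intros A al. destruct (Hf A al) as [h [Hh _]]. exists h. exact Hh.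
  - intros A a1 a2 h1 h2 E1 E2.
    rewrite <- (comp_idl _ _ _ h1), <- (comp_idl _ _ _ h2), <- Hkk, <- !comp_assoc.
    eapply Rle_trans. apply cmp_ne_r. apply (proj2 HY A a1 a2).
    + rewrite comp_assoc, Hk, <- comp_assoc, E1, comp_assoc. unfold H, BFix. rewrite Bgg. reflexivity.
    + rewrite comp_assoc, Hk, <- comp_assoc, E2, comp_assoc. unfold H, BFix. rewrite Bgg. reflexivity.
Qed.

Lemma NE_final X Z z : NEfinal X Z z -> IsFinalCoalgebra (B0 X) (BFix B0 B1 X) Z z.
Proof.
  intros HN A al. destruct (proj1 HN A al) as [h Hh]. exists h. split. exact Hh.
  intros h' Hh'. apply (NE_uniq X Z z HN A al); auto.
Qed.

Definition FZ X : C := proj1_sig (constructive_indefinite_description _ (exists_NE X)).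
Definition Fz X : hom (FZ X) (B0 X (FZ X)) :=
  proj1_sig (constructive_indefinite_description _
     (proj2_sig (constructive_indefinite_description _ (exists_NE X)))).
Lemma FNE X : NEfinal X (FZ X) (Fz X).
Proof.
  exact (proj2_sig (constructive_indefinite_description _
     (proj2_sig (constructive_indefinite_description _ (exists_NE X))))).
Qed.

Definition Fal (X X' : C) (f : hom X X') : hom (FZ X') (B0 X (FZ X')) :=
  cmp (B1 X' X (FZ X') (FZ X') f (idm _)) (Fz X').
Definition F1 (X X' : C) (f : hom X X') : hom (FZ X') (FZ X) :=
  proj1_sig (constructive_indefinite_description _ (proj1 (FNE X) (FZ X') (Fal X X' f))).
Lemma F1_eq X X' f : cmp (Fz X) (F1 X X' f) = cmp (H X _ _ (F1 X X' f)) (Fal X X' f).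
Proof. exact (proj2_sig (constructive_indefinite_description _ (proj1 (FNE X) (FZ X') (Fal X X' f)))). Qed.

Lemma F1id X : F1 X X (idm X) = idm (FZ X).
Proof.
  apply (NE_uniq X _ _ (FNE X) _ (Fal X X (idm X))). apply F1_eq.
  unfold Fal, H, BFix. rewrite Bid, !comp_idl, comp_idr. reflexivity.
Qed.

Lemma F1cmp (X Y Z : C) (f : hom X Y) (g : hom Y Z) :
  F1 X Z (cmp g f) = cmp (F1 X Y f) (F1 Y Z g).
Proof.
  apply (NE_uniq X _ _ (FNE X) _ (Fal X Z (cmp g f))). apply F1_eq.
  set (a := F1 X Y f). set (b := F1 Y Z g).
  assert (E1 : cmp (Fz X) a = cmp (B1 X X _ _ (idm X) a) (cmp (B1 Y X _ _ f (idm _)) (Fz Y))) by apply F1_eq.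
  assert (E2 : cmp (Fz Y) b = cmp (B1 Y Y _ _ (idm Y) b) (cmp (B1 Z Y _ _ g (idm _)) (Fz Z))) by apply F1_eq.
  transitivity (cmp (B1 X X _ _ (idm X) a) (cmp (cmp (B1 Y X _ _ f (idm _)) (B1 Y Y _ _ (idm Y) b))
     (cmp (B1 Z Y _ _ g (idm _)) (Fz Z)))).
  { rewrite comp_assoc, E1, <- !comp_assoc, E2. reflexivity. }
  rewrite <- Bx2, (Bx1 Y X (FZ Z) (FZ Y) f b).
  unfold H, BFix, Fal. rewrite <- (Bgg X), <- (Bff Z Y X). rewrite !comp_assoc. reflexivity.
Qed.

Lemma F1con (X Y : C) (f g : hom X Y) : mdist (F1 X Y f) (F1 X Y g) <= c * mdist f g.
Proof.
  eapply Rle_trans. apply (proj2 (FNE X) _ (Fal X Y f) (Fal X Y g)); apply F1_eq.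
  unfold Fal. eapply Rle_trans. apply cmp_ne_l. apply Hcon.
Qed.

Theorem main_exists (T : C) (HT : IsTerminal T) (Hlim : HasChainLimits C) (b : hom T (B0 T T)) :
  exists (Z : C) (z : hom Z (B0 Z Z)), IsLocallyFinalCoalgebra B0 B1 Z z.
Proof.
  destruct (proj1 (FNE T) T b) as [e0 _].
  destruct (proj1 HT (FZ T)) as [p0].
  destruct (tower_fix C Hstab T HT Hlim FZ F1 F1id F1cmp c Hc F1con e0 p0) as [L [phi [psi [E1 E2]]]].
  exists L, (cmp (B1 L L (FZ L) L (idm L) psi) (cmp (Fz L) phi)).
  unfold IsLocallyFinalCoalgebra. intros A al.
  destruct (proj1 (FNE L) A al) as [g Hg].
  exists (cmp psi g). split.
  - rewrite <- !comp_assoc. rewrite (comp_assoc _ _ _ _ _ phi psi), E2, comp_idl.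
    rewrite Hg. unfold H, BFix. rewrite comp_assoc, Bgg. reflexivity.
  - intros h' Hh'. rewrite <- (comp_idl _ _ _ h'). rewrite <- E1, <- comp_assoc. f_equal.
    apply (NE_uniq L _ _ (FNE L) A al); auto.
    rewrite comp_assoc. rewrite <- (comp_idl _ _ _ (Fz L)). rewrite <- (Bid L (FZ L)).
    rewrite <- E2. rewrite <- Bgg. rewrite <- !comp_assoc.
    rewrite (comp_assoc _ _ _ _ _ (Fz L) phi). rewrite (comp_assoc _ _ _ _ _ (B1 _ _ _ _ _ psi)).
    rewrite Hh'. unfold H, BFix. rewrite comp_assoc, Bgg. reflexivity.
Qed.

Lemma self_unique (V : C) (w : hom V (B0 V V)) (NV : NEfinal V V w) (k : hom V V) :
  cmp w k = cmp (B1 V V V V k k) w -> k = idm V.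
Proof.
  intros Ek. apply d_le0.
  assert (E : mdist k (idm V) <= mdist (cmp (B1 V V V V k (idm V)) w) (cmp (B1 V V V V (idm V) (idm V)) w)).
  { apply (proj2 NV V); unfold H, BFix; cbv beta.
    - rewrite Ek, comp_assoc, <- Bx1. reflexivity.
    - rewrite !(Bid V V), !comp_idl, comp_idr. reflexivity. }
  assert (E' : mdist (cmp (B1 V V V V k (idm V)) w) (cmp (B1 V V V V (idm V) (idm V)) w) <= c * mdist k (idm V)).
  { eapply Rle_trans. apply cmp_ne_l. apply Hcon. }
  pose proof (d_nonneg C _ _ k (idm V)). nra.
Qed.

Theorem main_unique (Hinh : forall X Y : C, inhabited (hom X Y))
  (Z Z' : C) (z : hom Z (B0 Z Z)) (z' : hom Z' (B0 Z' Z'))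
  (Hz : IsLocallyFinalCoalgebra B0 B1 Z z) (Hz' : IsLocallyFinalCoalgebra B0 B1 Z' z') :
  exists (i : hom Z Z') (j : hom Z' Z),
       cmp j i = idm Z /\ cmp i j = idm Z' /\
       cmp z' i = cmp (B1 Z Z' Z Z' j i) z.
Proof.
  pose proof (final_NE Z Z z Hz) as NZ. pose proof (final_NE Z' Z' z' Hz') as NZ'.
  set (al := fun j : hom Z' Z => cmp (B1 Z Z' Z Z j (idm Z)) z).
  set (al' := fun i : hom Z Z' => cmp (B1 Z' Z Z' Z' i (idm Z')) z').
  set (Psi := fun j => proj1_sig (constructive_indefinite_description _ (proj1 NZ' Z (al j)))).
  assert (HPsi : forall j, cmp z' (Psi j) = cmp (H Z' _ _ (Psi j)) (al j)).
  { intros j. exact (proj2_sig (constructive_indefinite_description _ (proj1 NZ' Z (al j)))). }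
  set (Psi' := fun i => proj1_sig (constructive_indefinite_description _ (proj1 NZ Z' (al' i)))).
  assert (HPsi' : forall i, cmp z (Psi' i) = cmp (H Z _ _ (Psi' i)) (al' i)).
  { intros i. exact (proj2_sig (constructive_indefinite_description _ (proj1 NZ Z' (al' i)))). }
  assert (C1 : forall j1 j2, mdist (Psi j1) (Psi j2) <= c * mdist j1 j2).
  { intros. eapply Rle_trans. apply (proj2 NZ' Z (al j1) (al j2)); apply HPsi.
    unfold al. eapply Rle_trans. apply cmp_ne_l. apply Hcon. }
  assert (C2 : forall i1 i2, mdist (Psi' i1) (Psi' i2) <= c * mdist i1 i2).
  { intros. eapply Rle_trans. apply (proj2 NZ Z' (al' i1) (al' i2)); apply HPsi'.
    unfold al'. eapply Rle_trans. apply cmp_ne_l. apply Hcon. }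
  destruct (Hinh Z' Z) as [x0].
  destruct (banach C Z' Z c Hc (fun j => Psi' (Psi j))) as [j Hj]; [|exact x0|].
  { intros f g. eapply Rle_trans. apply C2. pose proof (C1 f g).
    pose proof (d_nonneg C _ _ (Psi f) (Psi g)). pose proof (d_nonneg C _ _ f g). nra. }
  set (i := Psi j). fold i in Hj.
  assert (Ei : cmp z' i = cmp (B1 Z Z' Z Z' j i) z).
  { unfold i. rewrite HPsi. unfold al, H, BFix. rewrite comp_assoc, <- Bx1. reflexivity. }
  assert (Ej : cmp z j = cmp (B1 Z' Z Z' Z i j) z').
  { rewrite <- Hj at 1. rewrite HPsi'. rewrite Hj. unfold al', H, BFix. rewrite comp_assoc, <- Bx1. reflexivity. }
  exists i, j. split; [|split].
  - apply (self_unique Z z NZ). rewrite comp_assoc, Ej, <- comp_assoc, Ei, comp_assoc, <- Blaw. reflexivity.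
  - apply (self_unique Z' z' NZ'). rewrite comp_assoc, Ei, <- comp_assoc, Ej, comp_assoc, <- Blaw. reflexivity.
  - exact Ei.
Qed.

End Main.

Theorem theorem4p13 (C : MCategory) (T : C)
  (B0 : C -> C -> C)
  (B1 : forall X X' Y Y' : C, hom X' X -> hom Y Y' -> hom (B0 X Y) (B0 X' Y')) :
  IsStable C -> IsTerminal T -> HasChainLimits C ->
  IsBifunctor B0 B1 ->
  LocContractiveFst B0 B1 -> LocNonExpansiveSnd B0 B1 ->
  inhabited (hom T (B0 T T)) ->
  (forall X : C, FinalSeqConverges (B0 X) (BFix B0 B1 X)) ->
  (exists (Z : C) (z : hom Z (B0 Z Z)), IsLocallyFinalCoalgebra B0 B1 Z z) /\
  ((forall X Y : C, inhabited (hom X Y)) ->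
   forall (Z Z' : C) (z : hom Z (B0 Z Z)) (z' : hom Z' (B0 Z' Z')),
     IsLocallyFinalCoalgebra B0 B1 Z z -> IsLocallyFinalCoalgebra B0 B1 Z' z' ->
     exists (i : hom Z Z') (j : hom Z' Z),
       cmp j i = idm Z /\ cmp i j = idm Z' /\
       cmp z' i = cmp (B1 Z Z' Z Z' j i) z).
Proof.
  intros Hstab HT Hlim Hbif [c [Hc Hcon]] Hne [b] Hconv. split.
  - exact (main_exists C Hstab B0 B1 Hbif c Hc Hcon Hne Hconv T HT Hlim b).
  - intros Hinh Z Z' z z' Hz Hz'.
    exact (main_unique C Hstab B0 B1 Hbif c Hc Hcon Hne Hconv Hinh Z Z' z z' Hz Hz').
Qed.
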